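(* Let $(\mathcal P,\cdot,[-,\dots,-])$ be a nonzero solvable finite-dimensional Poisson $n$-Lie algebra over an algebraically closed field of characteristic zero. Then there exists a nonzero vector $v\in\mathcal P$ that is a common eigenvector of all operators $P_x$ ($x\in\mathcal P$) and $Q_y$ ($y\in\wedge^{n-1}\mathcal P$).
   Context: A Poisson $n$-Lie algebra is a commutative associative algebra $(\mathcal P,\cdot)$ with an $n$-linear skew-symmetric bracket satisfying the fundamental identity $[x_1,\dots,x_{n-1},[y_1,\dots,y_n]]=\sum_{i=1}^n[y_1,\dots,[x_1,\dots,x_{n-1},y_i],\dots,y_n]$ and the Leibniz rule $[y\cdot z,x_2,\dots,x_n]=y\cdot[z,x_2,\dots,x_n]+z\cdot[y,x_2,\dots,x_n]$. $P_x(z)=x\cdot z$; for $y=y_1\wedge\cdots\wedge y_{n-1}$, $Q_y(z)=[y_1,\dots,y_{n-1},z]$, extended linearly. $\mathcal P$ is solvable if $\mathcal P^{(s)}=0$ for some $s$, where $\mathcal P^{(1)}=\mathcal P$, $\mathcal P^{(k+1)}=[\mathcal P^{(k)},\mathcal P^{(k)},\mathcal P,\dots,\mathcal P]+\mathcal P^{(k)}\cdot\mathcal P^{(k)}$ (linear spans). *)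

(* Defs.v *)
From HB Require Import structures.
From mathcomp Require Import all_boot all_order all_algebra all_fingroup.
Set Implicit Arguments. Unset Strict Implicit. Unset Printing Implicit Defensive.
Import GRing.Theory.
Local Open Scope ring_scope.

Section PoissonNLie.
Variables (F : fieldType) (V : vectType F) (n : nat).

Definition upd (x : 'I_n -> V) (i : 'I_n) (w : V) : 'I_n -> V :=
  fun j => if j == i then w else x j.

(* the n-tuple (y_1, ..., y_{n-1}, z) *)
Definition ext (y : 'I_n.-1 -> V) (z : V) : 'I_n -> V :=
  fun j => if insub (val j) : option 'I_n.-1 is Some k then y k else z.

Variables (mul : V -> V -> V) (br : ('I_n -> V) -> V).

Record is_poisson_nlie : Prop := {
  mul_linl : forall (a : F) (u w z : V), mul (a *: u + w) z = a *: mul u z + mul w z;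
  mul_linr : forall (a : F) (u w z : V), mul z (a *: u + w) = a *: mul z u + mul z w;
  mul_comm : forall u w, mul u w = mul w u;
  mul_assoc : forall u w z, mul u (mul w z) = mul (mul u w) z;
  br_lin : forall (x : 'I_n -> V) (i : 'I_n) (a : F) (u w : V),
      br (upd x i (a *: u + w)) = a *: br (upd x i u) + br (upd x i w);
  br_skew : forall (s : 'S_n) (x : 'I_n -> V),
      br (fun i => x (s i)) = (-1) ^+ (odd_perm s) *: br x;
  br_fundamental : forall (x : 'I_n.-1 -> V) (y : 'I_n -> V),
      br (ext x (br y)) = \sum_(i < n) br (upd y i (br (ext x (y i))));
  br_leibniz : forall (x : 'I_n -> V) (i : 'I_n) (y z : V), val i = 0%N ->
      br (upd x i (mul y z)) = mul y (br (upd x i z)) + mul z (br (upd x i y))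
}.

Definition span_pred (S : V -> Prop) (v : V) : Prop :=
  forall W : {vspace V}, (forall u, S u -> u \in W) -> v \in W.

(* derived_series k = P^(k+1):  P^(1) = P,
   P^(k+1) = span [P^(k), P^(k), P, ..., P] + span (P^(k) . P^(k)) *)
Fixpoint derived_series (k : nat) : V -> Prop :=
  match k with
  | 0 => fun _ => True
  | k'.+1 => span_pred (fun v =>
      (exists x : 'I_n -> V, (forall i : 'I_n, (val i < 2)%N -> derived_series k' (x i))
                             /\ v = br x)
      \/ (exists a b, derived_series k' a /\ derived_series k' b /\ v = mul a b))
  end.

Definition solvable_pnl : Prop :=
  exists s : nat, forall v, derived_series s v -> v = 0.

End PoissonNLie.

(* Main.v *)
Require Import Defs.
From HB Require Import structures.
From mathcomp Require Import all_boot all_order all_algebra all_fingroup.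
From Stdlib Require Import ClassicalEpsilon FunctionalExtensionality Classical.
Set Implicit Arguments. Unset Strict Implicit. Unset Printing Implicit Defensive.
Import GRing.Theory.
Local Open Scope ring_scope.
Section MkEnd.
Variables (K : fieldType) (U : vectType K).
Definition mkEnd (f : U -> U) : 'End(U) :=
  match excluded_middle_informative (linear f) with
  | left h => linfun (HB.pack_for {linear U -> U} f (GRing.isLinear.Build K U U *:%R f h))
  | right _ => 0
  end.
Lemma mkEndE f : linear f -> forall v, mkEnd f v = f v.
Proof. move=> h v; rewrite /mkEnd; case: excluded_middle_informative => // h'.
by rewrite lfunE. Qed.

Lemma span_min (S : U -> Prop) : exists W : {vspace U},
  (forall u, S u -> u \in W) /\
  (forall W' : {vspace U}, (forall u, S u -> u \in W') -> (W <= W')%VS).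
Proof.
suff: forall d (W : {vspace U}), (\dim W < d)%N -> (forall u, S u -> u \in W) ->
   exists W : {vspace U}, (forall u, S u -> u \in W) /\
  (forall W' : {vspace U}, (forall u, S u -> u \in W') -> (W <= W')%VS).
  by move=> h; apply: (h _ fullv (ltnSn _)) => u _; apply: memvf.
elim=> // d IH W hd hS.
case: (classic (forall W' : {vspace U}, (forall u, S u -> u \in W') -> (W <= W')%VS)) => h.
  by exists W.
have [W' [hS' nW]] : exists W' : {vspace U}, (forall u, S u -> u \in W') /\ ~ (W <= W')%VS.
  apply: NNPP => hn; apply: h => W' hW'; apply: NNPP => hn'; apply: hn; exists W'; split => //.
apply: (IH (W :&: W')%VS).
  have lt : (\dim (W :&: W') < \dim W)%N.
    rewrite (ltn_leqif (dimv_leqif_sup (capvSl W W'))) subv_cap subvv /=.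
    by apply/negP.
  by rewrite ltnS in hd; apply: leq_trans lt hd.
by move=> u Su; rewrite memv_cap hS ?hS'.
Qed.
Definition comm (f g : 'End(U)) : 'End(U) := (f \o g)%VF - (g \o f)%VF.
Lemma commE (f g : 'End(U)) v : comm f g v = f (g v) - g (f v).
Proof. by rewrite /comm add_lfunE opp_lfunE !comp_lfunE. Qed.
Lemma comm_antisym (f g : 'End(U)) : comm f g = - comm g f.
Proof. by rewrite /comm opprB. Qed.

End MkEnd.

Section CommSpan.
Variables (K : fieldType) (U : vectType K).
Lemma comm_span (W1 W2 Wt : {vspace 'End(U)}) (S1 S2 : 'End(U) -> Prop) :
  (forall W' : {vspace 'End(U)}, (forall f, S1 f -> f \in W') -> (W1 <= W')%VS) ->
  (forall W' : {vspace 'End(U)}, (forall f, S2 f -> f \in W') -> (W2 <= W')%VS) ->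
  (forall a b, S1 a -> S2 b -> comm a b \in Wt) ->
  forall a b, a \in W1 -> b \in W2 -> comm a b \in Wt.
Proof.
have linL (b : 'End(U)) : linear (fun a => comm a b).
  move=> c a1 a2; apply/lfunP => v.
  rewrite !(commE, add_lfunE, scale_lfunE) linearP /=.
  by rewrite scalerBr opprD addrACA.
have linR (a : 'End(U)) : linear (comm a).
  move=> c b1 b2; apply/lfunP => v.
  rewrite !(commE, add_lfunE, scale_lfunE) linearP /=.
  by rewrite scalerBr opprD addrACA.
move=> h1 h2 h a b aW bW.
have step : forall a, S1 a -> forall b, b \in W2 -> comm a b \in Wt.
  move=> a0 Sa b0 bW0.
  have sub : (W2 <= mkEnd (comm a0) @^-1: Wt)%VS.
    by apply: h2 => f Sf; rewrite -memv_preim (mkEndE (linR a0)); apply: h.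
  by move: (subvP sub _ bW0); rewrite -memv_preim (mkEndE (linR a0)).
have sub : (W1 <= mkEnd (fun a => comm a b) @^-1: Wt)%VS.
  by apply: h1 => f Sf; rewrite -memv_preim (mkEndE (linL b)); apply: step.
by move: (subvP sub _ aW); rewrite -memv_preim (mkEndE (linL b)).
Qed.
End CommSpan.


Section Lie.
Variables (F : closedFieldType) (V : vectType F).
Hypothesis hchar : [pchar F] =i pred0.

Definition trc m (e : m.-tuple V) (f : 'End(V)) : F :=
  \sum_(i < m) coord e i (f e`_i).
Definition scalar_on (f : 'End(V)) (W : {vspace V}) :=
  exists c : F, forall w, w \in W -> f w = c *: w.


Lemma char0_eq0 (c : F) m : (0 < m)%N -> c *+ m = 0 -> c = 0.
Proof.
move=> hm /eqP; rewrite -mulr_natr mulf_eq0 => /orP[/eqP //|].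
by have /pcharf0P -> := hchar; rewrite eqn0Ngt hm.
Qed.

Lemma trc_comp m (e : m.-tuple V) (f g : 'End(V)) : (forall i : 'I_m, g e`_i \in <<e>>%VS) ->
  trc e (f \o g)%VF = \sum_(i < m) \sum_(j < m) coord e j (g e`_i) * coord e i (f e`_j).
Proof.
move=> hg; rewrite /trc; apply: eq_bigr => i _.
rewrite comp_lfunE {1}(coord_span (hg i)) !linear_sum; apply: eq_bigr => j _.
by rewrite !linearZ.
Qed.

Lemma trc_comm m (e : m.-tuple V) (f g : 'End(V)) :
  (forall i : 'I_m, f e`_i \in <<e>>%VS) -> (forall i : 'I_m, g e`_i \in <<e>>%VS) ->
  trc e (comm f g) = 0.
Proof.
move=> hf hg.
have -> : trc e (comm f g) = trc e (f \o g)%VF - trc e (g \o f)%VF.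
  rewrite /trc -sumrB; apply: eq_bigr => i _.
  by rewrite /comm add_lfunE opp_lfunE linearB.
rewrite (trc_comp _ hg) (trc_comp _ hf) exchange_big /=; apply/eqP; rewrite subr_eq0; apply/eqP.
by apply: eq_bigr => i _; apply: eq_bigr => j _; rewrite mulrC.
Qed.

Lemma trc_scalar m (e : m.-tuple V) (f : 'End(V)) (c : F) : free e ->
  (forall i : 'I_m, f e`_i = c *: e`_i) -> trc e f = c *+ m.
Proof.
move=> fe hf; rewrite /trc (eq_bigr (fun _ => c)) ?sumr_const ?card_ord //.
by move=> i _; rewrite hf linearZ /= coord_free // eqxx mulr1.
Qed.

Lemma eigen_exists (g : 'End(V)) (W : {vspace V}) : W != 0%VS ->
  (forall w, w \in W -> g w \in W) ->
  exists mu : F, exists w, [/\ w \in W, w != 0 & g w = mu *: w].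
Proof.
move=> W0 gW; set d := \dim W; set e := vbasis W.
have d0 : d != 0%N by rewrite /d dimv_eq0.
pose M : 'M[F]_d := \matrix_(i, j) coord e j (g e`_i).
have [mu] : exists mu, root (char_poly M) mu.
  by apply/closed_rootP; rewrite size_char_poly.
rewrite -eigenvalue_root_char => /eigenvalueP [v vM v0].
have eW : forall i : 'I_d, e`_i \in W.
  by move=> i; apply: vbasis_mem; apply: mem_nth; rewrite size_tuple.
exists mu, (\sum_i v 0 i *: e`_i); split.
- by apply: rpred_sum => i _; apply: rpredZ.
- apply/eqP => h; move/freeP: (basis_free (vbasisP W)) => /(_ _ h) vz.
  by move/eqP: v0; apply; apply/rowP => j; rewrite mxE vz.
- rewrite linear_sum /=.
  under eq_bigr => i _ do rewrite linearZ /= (coord_vbasis (gW _ (eW i))) scaler_sumr.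
  rewrite exchange_big scaler_sumr; apply: eq_bigr => j _.
  have hj := congr1 (fun A : 'rV_d => A 0 j) vM; rewrite /= !mxE in hj.
  rewrite scalerA -hj scaler_suml; apply: eq_bigr => i _; rewrite scalerA mxE //.
Qed.

Lemma common_eigen (G : {vspace 'End(V)}) (W : {vspace V}) : W != 0%VS ->
  (forall g w, g \in G -> w \in W -> g w \in W) ->
  (forall a b w, a \in G -> b \in G -> w \in W -> a (b w) = b (a w)) ->
  exists w, [/\ w \in W, w != 0 & forall g, g \in G -> exists c, g w = c *: w].
Proof.
move: {2}(\dim W).+1 (ltnSn (\dim W)) => N; elim: N W => // N IH W.
rewrite ltnS => hd W0 GW Gc.
case: (classic (exists g, g \in G /\ ~ scalar_on g W)) => [[g [gG gns]]|hns].
  have [mu [w0 [w0W w00 gw0]]] := eigen_exists W0 (fun w => GW g w gG).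
  set W2 := (W :&: lker (g - mu *: \1%VF))%VS.
  have memW2 w : (w \in W2) = (w \in W) && (g w == mu *: w).
    by rewrite memv_cap memv_ker add_lfunE opp_lfunE scale_lfunE id_lfunE subr_eq0.
  have W20 : W2 != 0%VS.
    by apply/eqP => h; move: (memW2 w0); rewrite h memv0 (negbTE w00) w0W gw0 eqxx.
  have sW2 : (W2 <= W)%VS by apply: capvSl.
  have lt : (\dim W2 < \dim W)%N.
    rewrite (ltn_leqif (dimv_leqif_sup sW2)); apply/negP => /subvP sWW2.
    apply: gns; exists mu => w wW; have := sWW2 _ wW.
    by rewrite memW2 wW => /eqP.
  have [w [wW2 w0' hw]] : exists w, [/\ w \in W2, w != 0 & forall g, g \in G -> exists c, g w = c *: w].
    apply: IH => //.
    - exact: leq_trans lt hd.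
    - move=> h w hG; rewrite !memW2 => /andP[wW /eqP gw].
      rewrite GW //= -Gc // gw linearZ //.
    - by move=> a b w aG bG /(subvP sW2) wW; apply: Gc.
  by exists w; split => //; apply: (subvP sW2).
exists (vpick W); split; first exact: memv_pick.
  by rewrite vpick0.
move=> g gG; case: (classic (scalar_on g W)) => [[c hc]|hn].
  by exists c; apply: hc; apply: memv_pick.
by case: hns; exists g.
Qed.
End Lie.
Section Krylov.
Variables (F : closedFieldType) (V : vectType F).
Hypothesis hchar : [pchar F] =i pred0.

Lemma krylov (G : {vspace 'End(V)}) (wt : 'End(V) -> F) (x : 'End(V)) (w : V) :
  w != 0 -> (forall g, g \in G -> comm g x \in G) ->
  (forall g, g \in G -> g w = wt g *: w) ->
  forall g, g \in G -> wt (comm g x) = 0.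
Proof.
move=> w0 hGx hwt g0 g0G.
pose e k := iter k x w.
pose U i := <<mkseq e i>>%VS.
have eU k i : (k < i)%N -> e k \in U i.
  by move=> ki; apply: memv_span; apply/mapP; exists k; rewrite ?mem_iota ?add0n.
have Umono i j : (i <= j)%N -> (U i <= U j)%VS.
  move=> ij; apply/span_subvP => v /mapP [k]; rewrite mem_iota add0n => /andP[_ ki] ->.
  by apply: eU; apply: leq_trans ki ij.
have xU i u : u \in U i -> x u \in U i.+1.
  move=> uU; have : x u \in (x @: U i)%VS by apply: memv_img.
  rewrite limg_span; apply: (subvP _); apply/span_subvP => v /mapP[y /mapP[k]].
  by rewrite mem_iota add0n => /andP[_ ki] -> ->; apply: (eU k.+1).
have C i : forall g, g \in G -> g (e i) - wt g *: e i \in U i.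
  elim: i => [|i IH] g gG.
    by rewrite /= hwt // subrr mem0v.
  have hc := IH _ (hGx g gG); have hg := IH g gG.
  have -> : g (e i.+1) - wt g *: e i.+1 = (comm g x (e i) - wt (comm g x) *: e i)
       + wt (comm g x) *: e i + x (g (e i) - wt g *: e i).
    by rewrite commE linearB linearZ /= subrK [x (wt g *: _)]linearZ /= addrA subrK scalerN.
  apply: rpredD; last exact: xU.
  apply: rpredD; last by apply: rpredZ; apply: eU.
  exact: (subvP (Umono i i.+1 (leqnSn i))).
have ex : exists i, (fun i => e i \in U i) i.
  apply: NNPP => hn.
  have nf : forall i, e i \notin U i by move=> i; apply/negP => h; apply: hn; exists i.
  have fr : forall i, free (mkseq e i).
    elim => [|i IH]; first exact: nil_free.
    have pe : perm_eq (rcons (mkseq e i) (e i)) (e i :: mkseq e i) by rewrite perm_rcons.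
    by rewrite mkseqS (perm_free pe) free_cons IH nf.
  have := fr (dim V).+1; rewrite /free size_mkseq => /eqP h.
  have := dimvS (subvf (U (dim V).+1)); rewrite dimvf /U h.
  by rewrite ltnn.
have [m hm hmin] := ex_minnP ex.
have m0 : (0 < m)%N.
  rewrite lt0n; apply/negP => /eqP m0; move: hm; rewrite m0 /U /= span_nil memv0.
  by rewrite (negbTE w0).
have fr : forall i, (i <= m)%N -> free (mkseq e i).
  elim => [|i IH] hi; first exact: nil_free.
  have pe : perm_eq (rcons (mkseq e i) (e i)) (e i :: mkseq e i) by rewrite perm_rcons.
  rewrite mkseqS (perm_free pe) free_cons IH ?(ltnW hi) // andbT.
  by apply/negP => h; have := hmin i h; rewrite leqNgt hi.
set s := mkseq e m; set E := in_tuple s.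
have sm : size s = m by rewrite size_mkseq.
have Ei (i : 'I_(size s)) : E`_i = e i by rewrite /= nth_mkseq // -sm.
have im (i : 'I_(size s)) : (i < m)%N by rewrite -sm.
have frE : free E by apply: fr.
have EU : <<E>>%VS = U m by [].
have pres g : g \in G -> forall i : 'I_(size s), g E`_i \in <<E>>%VS.
  move=> gG i; rewrite Ei -(subrK (wt g *: e i) (g (e i))).
  rewrite EU; apply: rpredD; last by apply: rpredZ; apply: eU.
  exact: (subvP (Umono i m (ltnW (im i)))) _ (C i g gG).
have presx : forall i : 'I_(size s), x E`_i \in <<E>>%VS.
  move=> i; rewrite Ei EU; have := im i; rewrite leq_eqVlt => /orP[/eqP h|lt].
    by move: hm; rewrite -h.
  exact: (eU i.+1 m lt).
have t0 := trc_comm (pres g0 g0G) presx.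
have cG := hGx g0 g0G.
have coord0 (i : 'I_(size s)) (u : V) : u \in U i -> coord E i u = 0.
  move=> uU; set T := in_tuple (mkseq e i).
  rewrite (coord_span uU) linear_sum big1 // => k _; rewrite linearZ /=.
  have ki : (k < i)%N by exact: ltn_ord k.
  have hk : (k < size s)%N by apply: (ltn_trans ki).
  have -> : (mkseq e i)`_k = E`_(Ordinal hk) by rewrite Ei /= nth_mkseq.
  rewrite coord_free //; case: eqP => [h|]; last by rewrite mulr0.
  by have /= hki := congr1 val h; move: ki; rewrite hki ltnn.
have : trc E (comm g0 x) = \sum_(i < size s) wt (comm g0 x).
  rewrite /trc; apply: eq_bigr => i _.
  rewrite Ei -(subrK (wt (comm g0 x) *: e i) (comm g0 x (e i))) linearD /= coord0 ?C //.
  by rewrite add0r linearZ /= -Ei coord_free // eqxx mulr1.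
rewrite sumr_const card_ord t0 => /esym; apply: char0_eq0 => //; rewrite sm //.
Qed.
End Krylov.
Section LieMain.
Variables (F : closedFieldType) (V : vectType F).
Hypothesis hchar : [pchar F] =i pred0.

Lemma lie_step (F0 G : {vspace 'End(V)}) (W : {vspace V}) :
  W != 0%VS -> (forall f w, f \in F0 -> w \in W -> f w \in W) -> (G <= F0)%VS ->
  (forall x g, x \in F0 -> g \in G -> comm g x \in G) ->
  (forall a b, a \in G -> b \in G -> scalar_on (comm a b) W) ->
  exists W2 : {vspace V}, [/\ W2 != 0%VS, (W2 <= W)%VS,
    (forall f w, f \in F0 -> w \in W2 -> f w \in W2) &
    (forall g, g \in G -> scalar_on g W2)].
Proof.
move=> W0 FW GF GFx Gs.
have GW g w : g \in G -> w \in W -> g w \in W.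
  by move=> gG wW; apply: FW => //; apply: (subvP GF).
have Gc a b w : a \in G -> b \in G -> w \in W -> a (b w) = b (a w).
  move=> aG bG wW; have [c hc] := Gs a b aG bG.
  set e := vbasis W.
  have eW (i : 'I_(\dim W)) : e`_i \in W.
    by apply: vbasis_mem; apply: mem_nth; rewrite size_tuple.
  have t0 : trc e (comm a b) = 0.
    by apply: trc_comm => i; rewrite (span_basis (vbasisP W)); apply: GW.
  have : trc e (comm a b) = c *+ \dim W.
    apply: trc_scalar; first exact: basis_free (vbasisP W).
    by move=> i; apply: hc.
  rewrite t0 => /esym /(char0_eq0 hchar) c0.
  have := hc w wW; rewrite c0 ?lt0n ?dimv_eq0 // scale0r commE => /eqP.
  by rewrite subr_eq0 => /eqP.
have [w0 [w0W w00 hw0]] := common_eigen W0 GW Gc.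
set d := \dim G; set b := vbasis G.
have bG (i : 'I_d) : b`_i \in G.
  by apply: vbasis_mem; apply: mem_nth; rewrite size_tuple.
have [lam hlam] := fin_all_exists (fun i : 'I_d => hw0 _ (bG i)).
pose wt g := \sum_(i < d) coord b i g * lam i.
set W2 := (W :&: \bigcap_(i < d) lker (b`_i - lam i *: \1%VF))%VS.
have bigP w : reflect (forall i : 'I_d, w \in lker (b`_i - lam i *: \1%VF))
    (w \in \bigcap_(i < d) lker (b`_i - lam i *: \1%VF))%VS.
  rewrite memvE; apply: (iffP subv_bigcapP) => h i.
    by rewrite memvE; apply: h.
  by move=> _; rewrite -memvE; apply: h.
have memW2 w : w \in W2 <-> w \in W /\ forall i : 'I_d, b`_i w = lam i *: w.
  rewrite memv_cap; split.
    move=> /andP[wW /bigP h]; split => // i; have := h i.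
    by rewrite memv_ker add_lfunE opp_lfunE scale_lfunE id_lfunE subr_eq0 => /eqP.
  move=> [wW h]; rewrite wW /=; apply/bigP => i.
  by rewrite memv_ker add_lfunE opp_lfunE scale_lfunE id_lfunE h subrr.
have wtP g w : g \in G -> w \in W2 -> g w = wt g *: w.
  move=> gG /memW2 [_ hw]; rewrite {1}(coord_vbasis gG) sum_lfunE scaler_suml.
  by apply: eq_bigr => i _; rewrite scale_lfunE hw scalerA.
have w0W2 : w0 \in W2 by apply/memW2; split => // i; apply: hlam.
have wtc x g : x \in F0 -> g \in G -> wt (comm g x) = 0.
  move=> xF gG; apply: (krylov hchar (G:=G) (wt:=wt) (x:=x) w00) => //.
    by move=> h hG; apply: GFx.
  by move=> h hG; apply: wtP.
exists W2; split.
- by apply/eqP => h; move: w0W2; rewrite h memv0 (negbTE w00).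
- exact: capvSl.
- move=> f w fF /[dup] wW2 /memW2 [wW hw]; apply/memW2; split; first exact: FW.
  move=> i; have h1 : comm b`_i f w = 0.
    by rewrite (wtP _ _ (GFx f _ fF (bG i)) wW2) wtc ?scale0r.
  move: h1; rewrite commE => /eqP; rewrite subr_eq0 => /eqP ->.
  by rewrite hw linearZ.
- by move=> g gG; exists (wt g) => w; apply: wtP.
Qed.

Lemma lie (Fs : nat -> {vspace 'End(V)}) (N : nat) :
  (fullv : {vspace V}) != 0%VS ->
  (forall l, (Fs l <= Fs 0%N)%VS) ->
  (forall l x g, x \in Fs 0 -> g \in Fs l -> comm g x \in Fs l) ->
  (forall l a b, a \in Fs l -> b \in Fs l -> comm a b \in Fs l.+1) ->
  (forall f, f \in Fs N -> f = 0) ->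
  exists v, v != 0 /\ forall f, f \in Fs 0 -> exists c, f v = c *: v.
Proof.
move=> V0 hsub h1 h2 h3.
suff: forall j (W : {vspace V}), W != 0%VS -> (forall f w, f \in Fs 0 -> w \in W -> f w \in W) ->
    (forall f, f \in Fs j -> scalar_on f W) ->
    exists v, v != 0 /\ forall f, f \in Fs 0 -> exists c, f v = c *: v.
  move/(_ N fullv V0 (fun f w _ _ => memvf _)); apply => f /h3 ->.
  by exists 0 => w _; rewrite zero_lfunE scale0r.
elim=> [|j IH] W W0 FW Fs_sc.
  exists (vpick W); split; first by rewrite vpick0.
  by move=> f fF; have [c hc] := Fs_sc f fF; exists c; apply: hc; apply: memv_pick.
have [W2 [W20 _ FW2 sc2]] := lie_step W0 FW (hsub j)
  (fun x g xF gG => h1 j x g xF gG) (fun a b aG bG => Fs_sc _ (h2 j a b aG bG)).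
exact: IH W2 W20 FW2 sc2.
Qed.
End LieMain.
Section NLie.
Variables (F : fieldType) (V : vectType F) (m : nat) (mul : V -> V -> V)
  (br : ('I_m.+2 -> V) -> V).
Hypothesis hP : is_poisson_nlie mul br.
Local Notation n := m.+2.
Local Notation extn := (@ext F V n).

Lemma br_ext x y : x =1 y -> br x = br y.
Proof. by move=> h; rewrite (functional_extensionality x y h). Qed.

Definition Lup (x : 'I_n -> V) i : 'End(V) := mkEnd (fun v => br (upd x i v)).
Lemma LupE (x : 'I_n -> V) (i : 'I_n) (v : V) : Lup x i v = br (upd x i v).
Proof. by rewrite mkEndE // => a u w; apply: (br_lin hP). Qed.

Lemma br_upd0 (x : 'I_n -> V) (i : 'I_n) : br (upd x i 0) = 0.
Proof. by rewrite -LupE linear0. Qed.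
Lemma br_updN (x : 'I_n -> V) (i : 'I_n) (v : V) : br (upd x i (- v)) = - br (upd x i v).
Proof. by rewrite -!LupE linearN. Qed.

Definition Pop (a : V) : 'End(V) := mkEnd (mul a).
Lemma PopE a v : Pop a v = mul a v.
Proof. by rewrite mkEndE // => c u w; apply: (mul_linr hP). Qed.

Lemma mulN a v : mul a (- v) = - mul a v.
Proof. by rewrite -!PopE linearN. Qed.
Lemma mul0 a : mul a 0 = 0.
Proof. by rewrite -PopE linear0. Qed.
Lemma mul0l a : mul 0 a = 0.
Proof. by rewrite (mul_comm hP) mul0. Qed.

Definition updq (y : 'I_m.+1 -> V) i w := fun j => if j == i then w else y j.

Lemma ext_upd (y : 'I_m.+1 -> V) (z : V) : extn y z =1 upd (extn y 0) ord_max z.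
Proof.
move=> j; rewrite /ext /upd; case: eqP => [->|hj]; first by rewrite insubF //= ltnn.
case: insubP => [k _ _ //|]; rewrite -ltnS => hn; case: hj; apply: val_inj => /=.
by apply/eqP; rewrite eqn_leq -ltnS ltn_ord leqNgt hn.
Qed.

Lemma ext_widen (y : 'I_m.+1 -> V) (z : V) (i : 'I_m.+1) : extn y z (widen_ord (leqnSn _) i) = y i.
Proof.
rewrite /ext; case: insubP => [k _ hk|]; last by rewrite /= ltn_ord.
by congr y; apply: val_inj.
Qed.

Lemma ext_max (y : 'I_m.+1 -> V) (z : V) : extn y z ord_max = z.
Proof. by rewrite /ext insubF //= ltnn. Qed.

Lemma ext_updw (y : 'I_m.+1 -> V) (z : V) (i : 'I_m.+1) (w : V) : upd (extn y z) (widen_ord (leqnSn _) i) w =1 extn (updq y i w) z.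
Proof.
move=> j; rewrite /ext /upd /updq; case: insubP => [k _ hk|hn].
  have -> : (j == widen_ord (leqnSn m.+1) i) = (k == i).
    by apply/eqP/eqP => h; apply: val_inj; rewrite /= ?hk ?h // -hk h.
  by [].
case: eqP => // h; move: hn; rewrite h /= ltn_ord //.
Qed.

Lemma upd_max_ext (x : 'I_n -> V) (v : V) : upd x ord_max v =1 extn (fun k => x (widen_ord (leqnSn _) k)) v.
Proof.
move=> j; rewrite ext_upd /upd; case: eqP => // h.
have [k hk] : exists k : 'I_m.+1, j = widen_ord (leqnSn _) k.
  have lt : (val j < m.+1)%N.
    by rewrite ltn_neqAle -ltnS ltn_ord andbT; apply/eqP => h'; apply: h; apply: val_inj.
  by exists (Ordinal lt); apply: val_inj.
by rewrite hk ext_widen.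
Qed.

Definition Qf (y : 'I_m.+1 -> V) z := br (extn y z).
Definition Qop (y : 'I_m.+1 -> V) : 'End(V) := mkEnd (Qf y).
Lemma QfE (y : 'I_m.+1 -> V) (z : V) : Qf y z = Lup (extn y 0) ord_max z.
Proof. by rewrite LupE /Qf; apply: br_ext; apply: ext_upd. Qed.
Lemma QopE (y : 'I_m.+1 -> V) (z : V) : Qop y z = Qf y z.
Proof.
rewrite mkEndE // => a u w; rewrite !QfE; exact: linearP.
Qed.

Lemma br_tperm (x : 'I_n -> V) (i j : 'I_n) : i != j -> br (fun k => x (tperm i j k)) = - br x.
Proof. by move=> hij; rewrite (br_skew hP) odd_tperm hij expr1 scaleN1r. Qed.

Lemma upd_tperm (x : 'I_n -> V) (i j : 'I_n) (v : V) :
  (fun k => upd x i v (tperm i j k)) =1 upd (fun k => x (tperm i j k)) j v.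
Proof.
move=> k; rewrite /upd (canF_eq (tpermK i j)) tpermL.
by case: eqP => // ->; rewrite tpermR.
Qed.

Lemma br_move (x : 'I_n -> V) (i j : 'I_n) (v : V) : i != j ->
  br (upd x i v) = - br (upd (fun k => x (tperm i j k)) j v).
Proof.
move=> hij; rewrite -[LHS]opprK -(br_tperm (upd x i v) hij).
by congr (- _); apply: br_ext; apply: upd_tperm.
Qed.

Lemma ord0_neq_max : (ord0 : 'I_n) != ord_max.
Proof. by apply/eqP => h; have := congr1 val h. Qed.

Lemma Qf_mul (y : 'I_m.+1 -> V) (a b : V) : Qf y (mul a b) = mul a (Qf y b) + mul b (Qf y a).
Proof.
set x0 := extn y 0.
have hx w : Qf y w = br (upd x0 ord_max w) by rewrite /Qf; apply: br_ext; apply: ext_upd.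
have ne : (ord_max : 'I_n) != ord0 by rewrite eq_sym ord0_neq_max.
set x1 := fun k => x0 (tperm ord_max ord0 k).
have back w : br (upd x1 ord0 w) = - Qf y w.
  rewrite (br_move _ _ ord0_neq_max) hx; congr (- br _); apply: functional_extensionality => k.
  rewrite /upd /x1 tpermC tpermK //.
rewrite [LHS]hx (br_move _ _ ne) -/x1 (br_leibniz hP) //.
by rewrite !back !mulN opprD !opprK.
Qed.

Lemma ds_vs k : exists W : {vspace V}, forall v, derived_series mul br k v <-> v \in W.
Proof.
case: k => [|k]; first by exists fullv => v; split => // _; apply: memvf.
have [W [hS hmin]] := span_min (fun v =>
      (exists x : 'I_n -> V, (forall i : 'I_n, (val i < 2)%N -> derived_series mul br k (x i))
                             /\ v = br x)
      \/ (exists a b, derived_series mul br k a /\ derived_series mul br k b /\ v = mul a b)).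
exists W => v; split => [h|vW W' hW']; first exact: h W hS.
exact: (subvP (hmin W' hW')).
Qed.

Definition A k : {vspace V} := proj1_sig (constructive_indefinite_description _ (ds_vs k)).
Lemma A_spec k v : derived_series mul br k v <-> v \in A k.
Proof. exact: (proj2_sig (constructive_indefinite_description _ (ds_vs k)) v). Qed.

Lemma A0 v : v \in A 0.
Proof. by apply/A_spec. Qed.

Definition o1 : 'I_n := @Ordinal n 1 isT.

Lemma A_br k (x : 'I_n -> V) : x ord0 \in A k -> x o1 \in A k -> br x \in A k.+1.
Proof.
move=> h0 h1; apply/A_spec => W hW; apply: hW; left; exists x; split => //.
case=> [[|[|i]] hi] //= _; apply/A_spec.
  by have -> : Ordinal hi = ord0 by apply: val_inj.
by have -> : Ordinal hi = o1 by apply: val_inj.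
Qed.

Lemma A_mul k a b : a \in A k -> b \in A k -> mul a b \in A k.+1.
Proof.
move=> ha hb; apply/A_spec => W hW; apply: hW; right; exists a, b.
by split; [apply/A_spec | split; [apply/A_spec|]].
Qed.

Lemma A_ind k (W : {vspace V}) :
  (forall x : 'I_n -> V, x ord0 \in A k -> x o1 \in A k -> br x \in W) ->
  (forall a b, a \in A k -> b \in A k -> mul a b \in W) -> (A k.+1 <= W)%VS.
Proof.
move=> H1 H2; apply/subvP => v /A_spec h; apply: h => u [[x [hx ->]]|[a [b [ha [hb ->]]]]].
  by apply: H1; apply/A_spec; apply: hx.
by apply: H2; apply/A_spec.
Qed.

Lemma A_mono k : (A k.+1 <= A k)%VS.
Proof.
elim: k => [|k IH]; first by apply/subvP => v _; apply: A0.
by apply: A_ind => [x h0 h1|a b ha hb]; [apply: A_br | apply: A_mul]; apply: (subvP IH).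
Qed.

Lemma A_monoS k l : (k <= l)%N -> (A l <= A k)%VS.
Proof.
move=> kl; rewrite -(subnK kl); elim: (l - k)%N => [|d IH]; first by rewrite add0n subvv.
by rewrite addSn; apply: subv_trans (A_mono _) IH.
Qed.

Lemma upd_same (x : 'I_n -> V) i : upd x i (x i) =1 x.
Proof. by move=> j; rewrite /upd; case: eqP => // ->. Qed.

Lemma A_ideal k : forall (x : 'I_n -> V) i, x i \in A k -> br x \in A k.
Proof.
elim: k => [|k IH] x i hi; first exact: A0.
suff hmax : forall x : 'I_n -> V, x ord_max \in A k.+1 -> br x \in A k.+1.
  case: (eqVneq i ord_max) => [e|ne]; first by apply: hmax; rewrite -e.
  rewrite -[br x]opprK -(br_tperm x ne) rpredN; apply: hmax; rewrite tpermR //.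
move=> {i hi} x hx.
have sub : (A k.+1 <= (Lup x ord_max @^-1: A k.+1))%VS.
  set z := fun k => x (widen_ord (leqnSn _) k).
  apply: A_ind => [y h0 h1|a b ha hb]; rewrite -memv_preim LupE (br_ext (upd_max_ext x _)) -/z.
    rewrite (br_fundamental hP); apply: rpred_sum => i _; apply: A_br.
      rewrite /upd; case: eqP => [e|_] //; apply: (IH _ ord_max); rewrite ext_max -e //.
    rewrite /upd; case: eqP => [e|_] //; apply: (IH _ ord_max); rewrite ext_max -e //.
  have := Qf_mul z a b; rewrite /Qf => ->.
  by apply: rpredD; apply: A_mul => //; apply: (IH _ ord_max); rewrite ext_max.
have := subvP sub (x ord_max) hx; rewrite -memv_preim LupE.
by rewrite (br_ext (upd_same x ord_max)).
Qed.

Lemma A_two k (x : 'I_n -> V) i j : i != j -> x i \in A k -> x j \in A k -> br x \in A k.+1.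
Proof.
move=> ij hi hj.
set t1 := tperm ord0 i; set j' := t1 j; set t2 := tperm o1 j'.
set s := (t2 * t1)%g.
have j'0 : j' != ord0.
  apply/eqP => h; have := congr1 t1 h; rewrite /j' tpermK /t1 tpermL => e.
  by move: ij; rewrite e eqxx.
have s0 : s ord0 = i by rewrite /s permM /t2 tpermD // /t1 tpermL.
have s1 : s o1 = j by rewrite /s permM /t2 tpermL /j' /t1 tpermK.
rewrite -(rpredZsign _ (odd_perm s)) -(br_skew hP); apply: A_br; rewrite ?s0 ?s1 //.
Qed.

Lemma A_idealQ k (y : 'I_m.+1 -> V) z j : y j \in A k -> Qf y z \in A k.
Proof. by move=> h; apply: (A_ideal (i := widen_ord (leqnSn _) j)); rewrite ext_widen. Qed.

Lemma A_idealQz k (y : 'I_m.+1 -> V) z : z \in A k -> Qf y z \in A k.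
Proof. by move=> h; apply: (A_ideal (i := ord_max)); rewrite ext_max. Qed.

Lemma widen_neq_max (j : 'I_m.+1) : widen_ord (leqnSn _) j != (ord_max : 'I_n).
Proof. by apply/eqP => h; have := congr1 val h => /= e; move: (ltn_ord j); rewrite e ltnn. Qed.

Lemma A_twoQ k (y : 'I_m.+1 -> V) z j : y j \in A k -> z \in A k -> Qf y z \in A k.+1.
Proof.
move=> h1 h2; apply: (A_two (widen_neq_max j)); rewrite ?ext_widen ?ext_max //.
Qed.

Lemma A_twoQ2 k (y : 'I_m.+1 -> V) z j1 j2 : j1 != j2 -> y j1 \in A k -> y j2 \in A k ->
  Qf y z \in A k.+1.
Proof.
move=> ne h1 h2.
have ne' : widen_ord (leqnSn _) j1 != widen_ord (leqnSn _) j2 :> 'I_n.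
  by apply: contra ne => /eqP h; apply/eqP; apply: val_inj; have := congr1 val h.
by apply: (A_two ne'); rewrite ext_widen.
Qed.

Lemma comm_PP a b : comm (Pop a) (Pop b) = 0.
Proof.
apply/lfunP => v; rewrite commE !PopE zero_lfunE !(mul_assoc hP) (mul_comm hP b a).
by rewrite subrr.
Qed.

Lemma comm_QP (y : 'I_m.+1 -> V) a : comm (Qop y) (Pop a) = Pop (Qf y a).
Proof.
apply/lfunP => v; rewrite commE !QopE !PopE Qf_mul addrC addKr (mul_comm hP) //.
Qed.

Lemma comm_PQ a (y : 'I_m.+1 -> V) : comm (Pop a) (Qop y) = - Pop (Qf y a).
Proof. by rewrite comm_antisym comm_QP. Qed.

Lemma upd_ext_max (y : 'I_m.+1 -> V) z w : upd (extn y z) ord_max w =1 extn y w.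
Proof.
move=> j; rewrite [RHS]ext_upd /upd [extn y z j]ext_upd /upd; case: eqP => //.
Qed.

Lemma comm_QQ (x y : 'I_m.+1 -> V) :
  comm (Qop x) (Qop y) = \sum_(i < m.+1) Qop (updq y i (Qf x (y i))).
Proof.
apply/lfunP => z; rewrite commE sum_lfunE !QopE.
rewrite {1}/Qf (br_fundamental hP) big_ord_recr /= ext_max.
rewrite (br_ext (upd_ext_max y z _)) -/(Qf x z) -/(Qf y (Qf x z)) addrK.
apply: eq_bigr => i _.
by rewrite ext_widen QopE /Qf; apply: br_ext; apply: ext_updw.
Qed.

Definition qgen (l : nat) (y : 'I_m.+1 -> V) :=
  (exists j, y j \in A (uphalf l)) \/
  (odd l /\ exists j1 j2, j1 != j2 /\ y j1 \in A l./2 /\ y j2 \in A l./2).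
Definition gen (l : nat) (f : 'End(V)) :=
  (exists a, a \in A (uphalf l) /\ f = Pop a) \/ (exists y, qgen l y /\ f = Qop y).

Definition Fs l : {vspace 'End(V)} :=
  proj1_sig (constructive_indefinite_description _ (span_min (gen l))).
Lemma Fs_gen l f : gen l f -> f \in Fs l.
Proof. exact: (proj1 (proj2_sig (constructive_indefinite_description _ (span_min (gen l)))) f). Qed.
Lemma Fs_min l (W : {vspace 'End(V)}) : (forall f, gen l f -> f \in W) -> (Fs l <= W)%VS.
Proof. exact: (proj2 (proj2_sig (constructive_indefinite_description _ (span_min (gen l)))) W). Qed.

Lemma odd_uphalf l : odd l -> uphalf l = (l./2).+1.
Proof. by move=> h; rewrite uphalf_half h. Qed.

Lemma qgen_Qf_u l y w : qgen l y -> Qf y w \in A (uphalf l).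
Proof.
case=> [[j hj]|[ho [j1 [j2 [ne [h1 h2]]]]]]; first exact: A_idealQ hj.
by rewrite odd_uphalf //; apply: A_twoQ2 ne h1 h2.
Qed.

Lemma qgen_Qf_up l y w : qgen l y -> w \in A (uphalf l) -> Qf y w \in A (l./2).+1.
Proof.
case=> [[j hj]|[ho [j1 [j2 [ne [h1 h2]]]]]] hw; last exact: A_twoQ2 ne h1 h2.
apply: (subvP (A_monoS (_ : ((l./2).+1 <= (uphalf l).+1)%N))); last exact: A_twoQ hj hw.
by rewrite ltnS uphalf_half leq_addl.
Qed.

Lemma pres_upd k (x y : 'I_m.+1 -> V) i j : y j \in A k ->
  updq y i (Qf x (y i)) j \in A k.
Proof. by rewrite /updq; case: eqP => [e|] // h; apply: A_idealQz; rewrite -e. Qed.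

Lemma qgen_pres l (x y : 'I_m.+1 -> V) i : qgen l y -> qgen l (updq y i (Qf x (y i))).
Proof.
case=> [[j hj]|[ho [j1 [j2 [ne [h1 h2]]]]]].
  by left; exists j; apply: pres_upd.
by right; split => //; exists j1, j2; split => //; split; apply: pres_upd.
Qed.

Lemma qgen_step l (x y : 'I_m.+1 -> V) i : qgen l x -> qgen l y ->
  qgen l.+1 (updq y i (Qf x (y i))).
Proof.
move=> hx; case=> [[c hc]|[ho [c1 [c2 [ne [h1 h2]]]]]].
  case: (eqVneq i c) => [e|ne].
    left; exists c; rewrite /updq -e eqxx.
    change (Qf x (y i) \in A (l./2).+1).
    by apply: (qgen_Qf_up hx); rewrite e.
  case ho: (odd l).
    left; exists c; rewrite /updq eq_sym (negbTE ne).
    by move: hc; rewrite odd_uphalf.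
  right; split; first by rewrite /= ho.
  exists i, c; split => //; split.
    by rewrite /updq eqxx; apply: qgen_Qf_u.
  by rewrite /updq eq_sym (negbTE ne).
left; exists i; rewrite /updq eqxx.
by have := qgen_Qf_u (y i) hx; rewrite odd_uphalf.
Qed.

Lemma H_sub l : (Fs l <= Fs 0)%VS.
Proof.
apply: Fs_min => f [[a [_ ->]]|[y [_ ->]]]; apply: Fs_gen.
  by left; exists a; split => //; apply: A0.
by right; exists y; split => //; left; exists ord0; apply: A0.
Qed.

Lemma H1 l x g : x \in Fs 0 -> g \in Fs l -> comm g x \in Fs l.
Proof.
move=> xF gF; apply: (comm_span (@Fs_min l) (@Fs_min 0%N) _ gF xF).
move=> a b [[a' [ha ->]]|[y [hy ->]]] [[b' [hb ->]]|[z [hz ->]]].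
- by rewrite comm_PP rpred0.
- rewrite comm_PQ rpredN; apply: Fs_gen; left; exists (Qf z a'); split => //.
  exact: A_idealQz.
- rewrite comm_QP; apply: Fs_gen; left; exists (Qf y b'); split => //.
  exact: qgen_Qf_u.
- rewrite comm_antisym comm_QQ rpredN; apply: rpred_sum => i _; apply: Fs_gen.
  by right; eexists; split; last reflexivity; apply: qgen_pres.
Qed.

Lemma H2 l a b : a \in Fs l -> b \in Fs l -> comm a b \in Fs l.+1.
Proof.
move=> aF bF; apply: (comm_span (@Fs_min l) (@Fs_min l) _ aF bF).
move=> a0 b0 [[a' [ha ->]]|[y [hy ->]]] [[b' [hb ->]]|[z [hz ->]]].
- by rewrite comm_PP rpred0.
- rewrite comm_PQ rpredN; apply: Fs_gen; left; exists (Qf z a'); split => //.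
  exact: qgen_Qf_up.
- rewrite comm_QP; apply: Fs_gen; left; exists (Qf y b'); split => //.
  exact: qgen_Qf_up.
- rewrite comm_QQ; apply: rpred_sum => i _; apply: Fs_gen.
  by right; eexists; split; last reflexivity; apply: qgen_step.
Qed.

Lemma H3 s : (forall v, v \in A s -> v = 0) -> forall f, f \in Fs s.*2 -> f = 0.
Proof.
move=> hs f fF.
suff sub : (Fs s.*2 <= 0)%VS by move: (subvP sub f fF); rewrite memv0 => /eqP.
have us : uphalf s.*2 = s by rewrite uphalf_half odd_double add0n doubleK.
apply: Fs_min => g [[a [ha ->]]|[y [[[j hj]|[ho _]] ->]]]; rewrite memv0; apply/eqP.
- by rewrite us in ha; apply/lfunP => v; rewrite PopE (hs a ha) mul0l zero_lfunE.
- rewrite us in hj; apply/lfunP => v; rewrite QopE zero_lfunE; apply: hs.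
  exact: A_idealQ hj.
- by rewrite odd_double in ho.
Qed.
End NLie.

Theorem theorem5p7 (F : closedFieldType) (hchar : [pchar F] =i pred0)
    (V : vectType F) (n : nat) (hn : (2 <= n)%N)
    (mul : V -> V -> V) (br : ('I_n -> V) -> V)
    (hP : is_poisson_nlie mul br)
    (hnz : exists v : V, v != 0)
    (hsolv : solvable_pnl mul br) :
  exists v : V, v != 0 /\
    (forall x : V, exists lam : F, mul x v = lam *: v) /\
    (forall y : 'I_n.-1 -> V, exists lam : F, br (ext y v) = lam *: v).
Proof.
move: n hn mul br hP hsolv; case=> [|[|m]] // _ mul br hP [s hs].
have As : forall v, v \in A mul br s -> v = 0.
  by move=> v h; apply: hs; apply/(A_spec mul br s v).
have V0 : (fullv : {vspace V}) != 0%VS.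
  case: hnz => v hv; apply/eqP => h; have := memvf v; rewrite h memv0.
  by rewrite (negbTE hv).
have [v [v0 hv]] := lie hchar (Fs := Fs mul br) (N := s.*2) V0 (@H_sub _ _ _ mul br)
  (@H1 _ _ _ mul br hP) (@H2 _ _ _ mul br hP) (@H3 _ _ _ mul br hP s As).
exists v; split => //; split => [x|y].
  have hx : Pop mul x \in Fs mul br 0 by apply: Fs_gen; left; exists x; split => //; apply: A0.
  have [c hc] := hv _ hx.
  by exists c; rewrite -(PopE hP) hc.
have hy : Qop br y \in Fs mul br 0.
  by apply: Fs_gen; right; exists y; split => //; left; exists ord0; apply: A0.
have [c hc] := hv _ hy.
by exists c; rewrite -hc (QopE hP).
Qed.
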